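(* Let $u$ be any configuration on $K_{m,n}$. Then there exists a proof $f$ for the rank of $u$ whose support is contained in $B_n$, i.e. with $f_{a_i}=0$ for all $i=1,\dots,m$.
   Context: Let $m,n\ge 1$. $K_{m,n}$ is the complete bipartite graph with vertex set $V=A_m\sqcup B_n$, $A_m=\{a_1,\dots,a_m\}$, $B_n=\{b_1,\dots,b_n\}$, with exactly one edge $\{a_i,b_j\}$ for every $i,j$; $a_m$ is the sink. A configuration is a function $u:V\to\mathbb Z$; $\mathrm{degree}(u)=\sum_{c}u_c$. For $c\in V$ with graph degree $d_c$, $\Delta^{(c)}=d_c e_c-\sum_{c'\text{ adjacent to }c}e_{c'}$, where $e_c$ is the indicator configuration of $c$. Two configurations are toppling equivalent if their difference is an integer combination of the $\Delta^{(c)}$. A configuration is effective if it is toppling equivalent to a non-negative configuration. $\mathrm{rank}(u)=-1+\min\{\mathrm{degree}(f): f\ge 0,\ u-f\text{ not effective}\}$. A proof for the rank of $u$ is a non-negative $f$ with $u-f$ not effective and $\mathrm{degree}(f)=\mathrm{rank}(u)+1$. The support of a non-negative configuration $f$ is $\{c\in V: f_c>0\}$. *)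

(* Defs.v *)
From mathcomp Require Import all_boot all_order all_algebra.
Set Implicit Arguments. Unset Strict Implicit. Unset Printing Implicit Defensive.
Import Order.TTheory GRing.Theory Num.Theory.
Local Open Scope ring_scope.

(* Vertices of K_{m,n}: inl i = a_{i+1} in A_m, inr j = b_{j+1} in B_n. *)
Definition vert (m n : nat) : finType := ('I_m + 'I_n)%type.

Definition adj (m n : nat) (c c' : vert m n) : bool :=
  match c, c' with
  | inl _, inr _ => true
  | inr _, inl _ => true
  | _, _ => false
  end.

Definition gdeg (m n : nat) (c : vert m n) : int :=
  match c with inl _ => (n%:Z) | inr _ => (m%:Z) end.

Definition config (m n : nat) := vert m n -> int.

Definition degree (m n : nat) (u : config m n) : int := \sum_(c : vert m n) u c.

Definition ind (m n : nat) (c : vert m n) : config m n :=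
  fun x => if x == c then 1 else 0.

Definition Delta (m n : nat) (c : vert m n) : config m n :=
  fun x => gdeg c * ind c x - \sum_(c' : vert m n | adj c c') ind c' x.

Definition toppling_equiv (m n : nat) (u v : config m n) : Prop :=
  exists k : vert m n -> int,
    forall x, u x - v x = \sum_(c : vert m n) k c * Delta c x.

Definition nonneg (m n : nat) (f : config m n) : Prop := forall x, 0 <= f x.

Definition effective (m n : nat) (u : config m n) : Prop :=
  exists v : config m n, nonneg v /\ toppling_equiv u v.

Definition csub (m n : nat) (u f : config m n) : config m n := fun x => u x - f x.

Definition rank_is (m n : nat) (u : config m n) (r : int) : Prop :=
  (exists f : config m n, [/\ nonneg f, ~ effective (csub u f) & degree f = r + 1])
  /\ (forall g : config m n, nonneg g -> ~ effective (csub u g) -> r + 1 <= degree g).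

Definition is_rank_proof (m n : nat) (u f : config m n) : Prop :=
  exists r : int, [/\ rank_is u r, nonneg f, ~ effective (csub u f) & degree f = r + 1].

(* Main.v *)
Require Import Defs.
From mathcomp Require Import all_boot all_order all_algebra.
From mathcomp Require Import zify.
From Stdlib Require Import Classical.
Import Order.TTheory GRing.Theory Num.Theory.
Local Open Scope ring_scope.

Section K.
Variables (m n : nat).

Definition Lap (k : config m n) (x : vert m n) : int :=
  match x with
  | inl i => n%:Z * k (inl i) - \sum_(j < n) k (inr j)
  | inr j => m%:Z * k (inr j) - \sum_(i < m) k (inl i)
  end.

Lemma sum_ind_adj (c x : vert m n) :
  \sum_(c' : vert m n | adj c c') ind c' x = (adj c x)%:R.
Proof.
case: (boolP (adj c x)) => hx.
  rewrite (bigD1 x) //= big1 ?addr0; first by rewrite /ind eqxx.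
  by move=> y /andP [_ hy]; rewrite /ind eq_sym (negbTE hy).
rewrite big1 // => y hy; rewrite /ind; case: eqP => // e; subst y.
by rewrite hy in hx.
Qed.

Lemma LapE (k : config m n) x :
  \sum_(c : vert m n) k c * Delta c x = Lap k x.
Proof.
rewrite /Delta.
under eq_bigr => c _ do rewrite sum_ind_adj mulrBr.
rewrite sumrB (bigD1 x) //= big1 ?addr0; last first.
  by move=> y hy; rewrite /ind eq_sym (negbTE hy) !mulr0.
rewrite /ind eqxx mulr1 big_sumType /=.
case: x => [i|j] /=.
  rewrite big1 ?add0r; last by move=> y _; rewrite /= mulr0.
  by rewrite mulrC; congr (_ - _); apply: eq_bigr => y _; rewrite mulr1.
rewrite [X in _ - (_ + X)]big1 ?addr0; last by move=> y _; rewrite /= mulr0.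
by rewrite mulrC; congr (_ - _); apply: eq_bigr => y _; rewrite mulr1.
Qed.

Lemma sum_Lap (k : config m n) : \sum_x Lap k x = 0.
Proof.
rewrite big_sumType /= !sumrB -!mulr_sumr !sumr_const !card_ord.
rewrite -[_ *+ m]mulr_natl -[_ *+ n]mulr_natl !natz.
by rewrite -[m%:Z * _ - _]opprB subrr.
Qed.


Lemma ind_ll (i i' : 'I_m) : ind (inl i) (inl i' : vert m n) = if i' == i then 1 else 0.
Proof. by rewrite /ind; case: eqP => [[->]|h]; [rewrite eqxx | case: eqP => // e; case: h; rewrite e]. Qed.
Lemma ind_lr (i : 'I_m) (j : 'I_n) : ind (inl i) (inr j : vert m n) = 0.
Proof. by []. Qed.
Lemma ind_rl (i : 'I_m) (j : 'I_n) : ind (inr j) (inl i : vert m n) = 0.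
Proof. by []. Qed.
Lemma ind_rr (j j' : 'I_n) : ind (inr j) (inr j' : vert m n) = if j' == j then 1 else 0.
Proof. by rewrite /ind; case: eqP => [[->]|h]; [rewrite eqxx | case: eqP => // e; case: h; rewrite e]. Qed.

Lemma eff_iff (D : config m n) : effective D <-> exists k, forall x, 0 <= D x - Lap k x.
Proof.
split.
  case=> v [hv [k hk]]; exists k => x; have := hk x; rewrite LapE => <-.
  by rewrite opprB addrC subrK.
case=> k hk; exists (fun x => D x - Lap k x); split => //.
by exists k => x; rewrite LapE opprB addrC subrK.
Qed.

Lemma Lap_shift (k : config m n) a x : Lap (fun c => k c - a) x = Lap k x.
Proof.
case: x => [i|j] /=; rewrite sumrB sumr_const card_ord -mulr_natl natz mulrBr;
by rewrite opprB addrA subrK.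
Qed.

Lemma ind_ge0 (c x : vert m n) : 0 <= ind c x.
Proof. by rewrite /ind; case: eqP. Qed.

Lemma Lap_mono (F G : config m n) x : (forall c, G c <= F c) -> F x = G x ->
  Lap F x <= Lap G x.
Proof.
move=> hle e; case: x e => [i|j] /= ->; apply: lerB => //; exact: ler_sum.
Qed.

Lemma key (hn : (0 < n)%N) (D : config m n) (i : 'I_m) :
  (forall j : 'I_n, effective (fun x => D x + ind (inl i) x - ind (inr j) x)) ->
  effective D.
Proof.
move=> H.
have : forall j : 'I_n, exists k : config m n, forall x,
    0 <= D x + ind (inl i) x - ind (inr j) x - Lap k x.
  by move=> j; have /eff_iff := H j.
case/fin_all_exists => k Hk.
pose g := fun j (c : vert m n) => k j c - k j (inl i).
have Hg : forall j x, 0 <= D x + ind (inl i) x - ind (inr j) x - Lap (g j) x.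
  by move=> j x; rewrite /g Lap_shift.
have g0 : forall j, g j (inl i) = 0 by move=> j; rewrite /g subrr.
pose j0 : 'I_n := Ordinal hn.
pose jm c := [arg max_(j > j0) g j c]%O.
pose F c := g (jm c) c.
have Fge : forall j c, g j c <= F c.
  move=> j c; rewrite /F /jm; case: arg_maxP => // j1 _ hj1; exact: hj1.
have HF : forall x, - ind (inl i) x <= D x - Lap F x.
  move=> x; have h1 := Hg (jm x) x.
  have h2 : Lap F x <= Lap (g (jm x)) x by apply: Lap_mono => // c; exact: Fge.
  have h3 := ind_ge0 (inr (jm x)) x.
  lia.
have F0 : F (inl i) = 0 by rewrite /F g0.
case: (boolP [exists j, g j (inr j) < F (inr j)]).
  case/existsP => j hj; apply/eff_iff; exists F => x.
  case: (eqVneq x (inl i)) => [->|hx]; last first.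
    have := HF x; rewrite /ind (negbTE hx) oppr0; done.
  have := Hg j (inl i); rewrite /= F0 g0 ind_ll eqxx ind_rl !mulr0 !sub0r.
  have : \sum_(j1 < n) g j (inr j1) + 1 <= \sum_(j1 < n) F (inr j1).
    rewrite [X in _ <= X](bigD1 j) //= [X in X + 1](bigD1 j) //=.
    rewrite addrAC; apply: lerD; first by rewrite lezD1.
    by apply: ler_sum => c _; exact: Fge.
  move=> h1 h2; apply: (le_trans h2); rewrite subr0 !opprK -addrA lerD2l.
  by rewrite addrC.
rewrite negb_exists => /forallP hall.
have Feq : forall j, F (inr j) = g j (inr j).
  move=> j; have := hall j; have := Fge j (inr j); lia.
apply/eff_iff; exists (fun c => F c - ind (inl i) c) => x.
case: x => [i'|j] /=.
  rewrite ind_ll; under eq_bigr => j _ do rewrite ind_lr subr0.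
  have := HF (inl i'); rewrite ind_ll /=.
  case: (i' == i) => /=; last by rewrite subr0 oppr0.
  have : (1 <= n%:Z) by rewrite lez_nat.
  lia.
rewrite ind_lr subr0.
have -> : \sum_(i0 < m) (F (inl i0) - ind (inl i) (inl i0 : vert m n)) =
          \sum_(i0 < m) F (inl i0) - 1.
  rewrite sumrB; congr (_ - _).
  under eq_bigr => i0 _ do rewrite ind_ll.
  by rewrite (bigD1 i) //= eqxx big1 ?addr0 // => i0 /negbTE ->.
have h1 := Hg j (inr j).
have h2 : Lap F (inr j) <= Lap (g j) (inr j).
  by apply: Lap_mono => // c; exact: Fge.
move: h1 h2; rewrite ind_lr ind_rr eqxx /=.
lia.
Qed.

Lemma degree_csub (u g : config m n) : degree (csub u g) = degree u - degree g.
Proof. by rewrite /degree /csub sumrB. Qed.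

Lemma eff_deg (D : config m n) : effective D -> 0 <= degree D.
Proof.
case/eff_iff => k hk.
have : 0 <= \sum_x (D x - Lap k x) by apply: sumr_ge0 => x _.
by rewrite sumrB sum_Lap subr0.
Qed.

Lemma eff_ext (D D' : config m n) : (forall x, D x = D' x) -> effective D -> effective D'.
Proof.
move=> e /eff_iff [k hk]; apply/eff_iff; exists k => x; rewrite -e; exact: hk.
Qed.

Lemma sum_ind (c : vert m n) : \sum_x ind c x = 1.
Proof.
rewrite (bigD1 c) //= /ind eqxx big1 ?addr0 // => y /negbTE -> //.
Qed.
Lemma degree_single (c : vert m n) (a : int) :
  degree (fun x => if x == c then a else 0) = a.
Proof.
rewrite /degree (bigD1 c) //= eqxx big1 ?addr0 // => y /negbTE -> //.
Qed.
End K.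

Lemma min_exists (P : nat -> Prop) k : P k ->
  exists k0, P k0 /\ forall k', P k' -> (k0 <= k')%N.
Proof.
elim/ltn_ind: k => k IH Pk.
case: (classic (exists k', (k' < k)%N /\ P k')) => [[k' [lt Pk']]|h].
  exact: IH lt Pk'.
exists k; split => // k' Pk'; rewrite leqNgt; apply/negP => lt; apply: h.
by exists k'.
Qed.


Theorem lemma8p2 (m n : nat) (hm : (1 <= m)%N) (hn : (1 <= n)%N)
  (u : config m n) :
  exists f : config m n, is_rank_proof u f /\ (forall i : 'I_m, f (inl i) = 0).
Proof.
pose i0 : 'I_m := Ordinal hm.
pose P k := exists g : config m n,
  [/\ nonneg g, ~ effective (csub u g) & degree g = k%:Z].
have P0 : P (`|degree u|%N.+1).
  exists (fun x => if x == inl i0 then (`|degree u|%N.+1)%:Z else 0).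
  have dg : degree (fun x : vert m n => if x == inl i0 then (`|degree u|%N.+1)%:Z else 0)
            = (`|degree u|%N.+1)%:Z.
    exact: degree_single.
  split => //.
    by move=> x; case: eqP.
  move/eff_deg; rewrite degree_csub dg; lia.
have [k0 [[g0 [g0n g0e g0d]] k0min]] := @min_exists P _ P0.
pose Am (g : config m n) := \sum_(i < m) g (inl i).
pose Q a := exists g : config m n,
  [/\ nonneg g, ~ effective (csub u g), degree g = k0%:Z & Am g = a%:Z].
have Q0 : Q (`|Am g0|%N).
  exists g0; split => //.
  have : 0 <= Am g0 by apply: sumr_ge0 => i _; exact: g0n.
  lia.
have [a0 [[f [fn fe fd fa]] a0min]] := @min_exists Q _ Q0.
have fA : forall i : 'I_m, f (inl i) = 0.
  case: (boolP [exists i, f (inl i) != 0]); last first.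
    by rewrite negb_exists => /forallP h i; apply/eqP; have := h i; rewrite negbK.
  case/existsP => i fi.
  have fi1 : 1 <= f (inl i) by have := fn (inl i); lia.
  have : ~ (forall j : 'I_n, effective (fun x => csub u f x + ind (inl i) x - ind (inr j) x)).
    by move=> h; apply: fe; exact: (@key m n hn _ i h).
  case/not_all_ex_not => j hj.
  pose f' := fun x => f x - ind (inl i) x + ind (inr j) x.
  have Am1 : 1 <= Am f.
    rewrite /Am (bigD1 i) //=; have : 0 <= \sum_(i1 < m | i1 != i) f (inl i1).
      by apply: sumr_ge0 => y _; exact: fn.
    by move=> h; apply: le_trans fi1 _; rewrite lerDl.
  have a01 : (1 <= a0)%N by move: Am1; rewrite fa; lia.
  have Qa : Q (a0.-1).
    exists f'; split.
    - case=> [i'|j'] /=; rewrite /f'.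
        rewrite ind_ll ind_rl addr0; case: eqP => [->|_]; last by rewrite subr0; exact: fn.
        by rewrite subr_ge0.
      rewrite ind_lr ind_rr subr0; apply: addr_ge0; first exact: fn.
      by case: eqP.
    - move=> he; apply: hj; apply: eff_ext he => x; rewrite /csub /f'.
      lia.
    - rewrite /f' /degree big_split sumrB /= !sum_ind subrK; exact: fd.
    - rewrite /Am /f'.
      under eq_bigr => i' _ do rewrite ind_ll ind_rl addr0.
      rewrite sumrB -/(Am f) fa.
      rewrite (bigD1 i) //= eqxx big1 ?addr0; last by move=> y /negbTE ->.
      lia.
  have := a0min _ Qa.
  lia.
exists f; split => //.
exists (k0%:Z - 1); split => //; last by rewrite fd subrK.
split.
  by exists f; split => //; rewrite fd subrK.
move=> g gn ge; rewrite subrK.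
have g0' : 0 <= degree g by apply: sumr_ge0 => x _; exact: gn.
have : P (`|degree g|%N) by exists g; split => //; lia.
move/k0min; lia.
Qed.
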